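(* Let $\mathcal{P}$ be a family of probability distributions on a domain $\mathcal{X}$, let $\theta:\mathcal{P}\to\Theta\subset\mathbb{R}$, let $\alpha\in[0,1]$ and $t:\mathbb{N}\to\mathbb{R}_+$. Suppose $\{P_v\}_{v\in\mathcal{V}}\subset\mathcal{P}$ is a sub-family indexed by $\mathcal{V}=\{0,1\}^\infty$ with parameter separation $\{\delta_k\}_{k\in\mathbb{N}}$, i.e. for all $k\in\mathbb{N}$ and all $v,v'\in\mathcal{V}$ with $v_{1:k}\neq v'_{1:k}$ we have $\delta_k\le|\theta(P_v)-\theta(P_{v'})|$. Suppose $\{\hat\theta_n\}_{n\in\mathbb{N}}$ is an $(\alpha,t(\cdot))$-estimator. Then, for $n_k=\inf\{n: t(n)<\delta_k/2\}$, there exists an $(\alpha,\{n_k\})$-test for the family $\{P_v\}_{v\in\mathcal{V}}$.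
   Context: For $v\in\mathcal{V}=\{0,1\}^\infty$ and $k\le l$, $v_{k:l}=(v_k,\dots,v_l)$. Observations $X_1,X_2,\dots$ are i.i.d. from a distribution $P$; an estimator sequence $\{\hat\theta_n\}$ consists of functions $\hat\theta_n(X_{1:n})$. It is an $(\alpha,t(\cdot))$-estimator if for all $P\in\mathcal{P}$, $\mathbb{P}_{X_i\sim P\text{ i.i.d.}}\big(|\hat\theta_n(X_{1:n})-\theta(P)|\le t(n)\text{ for all }n\in\mathbb{N}\big)\ge1-\alpha$. For a family $\{P_v\}_{v\in\mathcal{V}}$, let $\mathbb{P}_v$ denote the probability under which $X_1,X_2,\dots$ are i.i.d. $P_v$. A sequence of $\{0,1\}$-valued randomized tests $\{\hat V_k\}_{k\in\mathbb{N}}$, with $\hat V_k$ a (randomized) function of $X_{1:n_k}$, is an $(\alpha,\{n_k\})$-test if for all $v\in\mathcal{V}$, $\mathbb{P}_v(\hat V_k(X_{1:n_k})=v_k\text{ for all }k\in\mathbb{N})\ge1-\alpha$. *)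

(* Defs.v *)
From HB Require Import structures.
From mathcomp Require Import all_boot all_order all_algebra.
From mathcomp Require Import all_classical all_reals all_analysis.
Set Implicit Arguments. Unset Strict Implicit. Unset Printing Implicit Defensive.
Import Order.TTheory GRing.Theory Num.Theory.
Local Open Scope classical_set_scope.
Local Open Scope ring_scope.

(* Indexing conventions: a sample X_1, X_2, ... is a sequence [Xs : nat -> _]
   with paper X_j = Xs (j-1); the prefix X_{1:n} is the n-tuple
   [tuple Xs i w | i < n].  Likewise v in V = {0,1}^oo is [v : nat -> bool]
   with paper v_j = v (j-1). *)

Section defs.
Context {R : realType} {dX : measure_display} {X : measurableType dX}.

Definition sample {T : Type} (Xs : nat -> T -> X) (n : nat) (w : T) : n.-tuple X :=
  [tuple Xs i w | i < n].

(* Under mu, the X_i are i.i.d. with law P (mutual independence of the whole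
   sequence = product rule for every finite initial segment). *)
Definition iid_seq {dO : measure_display} {O : measurableType dO}
  (mu : probability O R) (Xs : nat -> O -> X) (P : probability X R) : Prop :=
  (forall i, measurable_fun setT (Xs i)) /\
  forall (n : nat) (A : nat -> set X), (forall i, measurable (A i)) ->
    mu (\bigcap_(i in `I_n) (Xs i @^-1` A i)) = (\prod_(i < n) P (A i))%E.

Definition iid_seq_aux {dO : measure_display} {O : measurableType dO}
  {dW : measure_display} {W : measurableType dW}
  (mu : probability O R) (Xs : nat -> O -> X) (P : probability X R)
  (U : O -> W) (nu : probability W R) : Prop :=
  (forall i, measurable_fun setT (Xs i)) /\ measurable_fun setT U /\
  forall (n : nat) (A : nat -> set X) (B : set W),
    (forall i, measurable (A i)) -> measurable B ->
    mu ((\bigcap_(i in `I_n) (Xs i @^-1` A i)) `&` (U @^-1` B))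
      = ((\prod_(i < n) P (A i)) * nu B)%E.

Definition is_estimator (PP : set (probability X R))
  (theta : probability X R -> R) (alpha : R) (t : nat -> R)
  (theta_hat : forall n : nat, n.-tuple X -> R) : Prop :=
  (forall n, measurable_fun setT (theta_hat n)) /\
  forall P, PP P ->
  forall (dO : measure_display) (O : measurableType dO) (mu : probability O R)
         (Xs : nat -> O -> X), iid_seq mu Xs P ->
    ((1 - alpha)%:E <=
     mu [set w | forall n, (0 < n)%N ->
                 (`|theta_hat n (sample Xs n w) - theta P| <= t n)%R])%E.

Definition prefix_ne (v v' : nat -> bool) (k : nat) : Prop :=
  exists i, (i < k)%N /\ v i <> v' i.

Definition param_separation (theta : probability X R -> R)
  (Pv : (nat -> bool) -> probability X R) (delta : nat -> R) : Prop :=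
  forall k, (0 < k)%N -> forall v v', prefix_ne v v' k ->
    delta k <= `|theta (Pv v) - theta (Pv v')|.

(* m = inf { n in N : t(n) < d }  (N = {1,2,...}); only satisfiable when
   this set is nonempty *)
Definition is_inf_index (t : nat -> R) (d : R) (m : nat) : Prop :=
  [/\ (0 < m)%N, t m < d & forall m', (0 < m')%N -> t m' < d -> (m <= m')%N].

Definition is_test {dW : measure_display} {W : measurableType dW}
  (Pv : (nat -> bool) -> probability X R) (alpha : R) (nk : nat -> nat)
  (nu : probability W R) (V : forall k : nat, (nk k).-tuple X * W -> bool)
  : Prop :=
  (forall k, measurable (V k @^-1` [set true])) /\
  forall v : nat -> bool,
  forall (dO : measure_display) (O : measurableType dO) (mu : probability O R)
         (Xs : nat -> O -> X) (U : O -> W), iid_seq_aux mu Xs (Pv v) U nu ->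
    ((1 - alpha)%:E <=
     mu [set w | forall k, (0 < k)%N -> V k (sample Xs (nk k) w, U w) = v k.-1])%E.
End defs.

(* Main.v *)
Require Import Defs.
From HB Require Import structures.
From mathcomp Require Import all_boot all_order all_algebra.
From mathcomp Require Import all_classical all_reals all_analysis.
From mathcomp Require Import measurable_realfun.
Import Order.TTheory GRing.Theory Num.Theory numFieldNormedType.Exports.
Local Open Scope classical_set_scope.
Local Open Scope ring_scope.

Lemma sample_measurable (dX : measure_display) (X : measurableType dX)
  (dO : measure_display) (O : measurableType dO) (Xs : nat -> O -> X) n :
  (forall i, measurable_fun setT (Xs i)) ->
  measurable_fun setT (sample Xs n).
Proof.
move=> mX; apply/measurable_fun_tnthP => i.
have -> : ((fun x => tnth x i) \o sample Xs n) = Xs i.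
  by apply: funext => w /=; rewrite /sample tnth_mktuple.
exact: mX.
Qed.

Lemma bigcap_pos_eq (O : Type) (P : nat -> O -> Prop) :
  [set w | forall k, (0 < k)%N -> P k w] = \bigcap_(k in [set k | (0 < k)%N]) [set w | P k w].
Proof. by apply/seteqP; split => w /= H k /= Hk; apply: H. Qed.

Theorem proposition1 (R : realType) (dX : measure_display) (X : measurableType dX)
  (PP : set (probability X R)) (theta : probability X R -> R)
  (alpha : R) (t : nat -> R)
  (Pv : (nat -> bool) -> probability X R) (delta : nat -> R)
  (theta_hat : forall n : nat, n.-tuple X -> R) (nk : nat -> nat) :
  0 <= alpha <= 1 ->
  (forall n, (0 < n)%N -> 0 <= t n) ->
  (forall v, PP (Pv v)) ->
  param_separation theta Pv delta ->
  is_estimator PP theta alpha t theta_hat ->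
  (forall k, (0 < k)%N -> is_inf_index t (delta k / 2) (nk k)) ->
  exists (dW : measure_display) (W : measurableType dW) (nu : probability W R)
         (V : forall k : nat, (nk k).-tuple X * W -> bool),
    @is_test R dX X dW W Pv alpha nk nu V.
Proof.
move=> _ t0 PPv sep [mth est] ninf.
pose S k : set R := \bigcup_(v' in [set v' : nat -> bool | v' k.-1]) ball (theta (Pv v')) (delta k / 2).
have mS k : measurable (S k).
  by apply: open_measurable; apply: bigcup_open => v' _; exact: ball_open.
pose V k (xw : (nk k).-tuple X * X) : bool := `[< S k (theta_hat (nk k) xw.1) >].
have mV : forall k, measurable (V k @^-1` [set true]).
  move=> k.
  have -> : V k @^-1` [set true] = (theta_hat (nk k) \o fst) @^-1` S k.
    by apply/seteqP; split => xw /=; rewrite /V => /asboolP.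
  have mf : measurable_fun [set: (nk k).-tuple X * X] (theta_hat (nk k) \o fst).
    apply: measurableT_comp; [exact: mth | exact: measurable_fst].
  by have := mf measurableT _ (mS k); rewrite setTI.
exists dX, X, (Pv (fun _ => false)), V; split => // v dO O mu Xs U [mXs [mU Hind]].
have iid : iid_seq mu Xs (Pv v).
  split => // n A mA; have := Hind n A setT mA measurableT.
  by rewrite preimage_setT setIT probability_setT mule1.
have := est _ (PPv v) dO O mu Xs iid.
set E := [set w | _]; set T := [set w | _].
move=> HE; apply: (le_trans HE); apply: le_measure; rewrite ?inE.
- rewrite /E bigcap_pos_eq; apply: bigcap_measurableType => n _.
  have mg : measurable_fun setT (fun w => `|theta_hat n (sample Xs n w) - theta (Pv v)|).
    apply: measurableT_comp; first exact: normr_measurable.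
    apply: measurable_funB => //.
    apply: (measurableT_comp (mth n)); exact: sample_measurable.
  have := mg measurableT _ (@measurable_itv _ `]-oo, t n]).
  rewrite setTI; congr measurable; apply/seteqP; split => w /=; rewrite in_itv /=; done.
- rewrite /T bigcap_pos_eq; apply: bigcap_measurableType => k _.
  have mh : measurable_fun setT (fun w => (sample Xs (nk k) w, U w)).
    apply: measurable_fun_pair => //; exact: sample_measurable.
  case: (v k.-1).
  + by have := mh measurableT _ (mV k); rewrite setTI.
  + have := mh measurableT _ (measurableC (mV k)); rewrite setTI.
    congr measurable; apply/seteqP; split => w /=; case: (V k _) => //.
- move=> w Ew k k0; have [nk0 tlt _] := ninf k k0.
  have := Ew _ nk0; set y := theta_hat _ _ => Hy.
  have Hyl : `|y - theta (Pv v)| < delta k / 2 by apply: le_lt_trans Hy tlt.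
  rewrite /V /=; case Hv: (v k.-1).
  + apply/asboolP; exists v => //=.
    by rewrite /ball /= distrC.
  + apply/asboolP => -[v' /= v'k]; rewrite /ball /= => Hb.
    have pn : prefix_ne v v' k.
      by exists k.-1; split; [rewrite prednK // ltnSn | rewrite Hv v'k].
    have := sep k k0 v v' pn.
    have : `|theta (Pv v) - theta (Pv v')| < delta k.
      rewrite -[theta (Pv v)](subrK y) -addrA.
      apply: (le_lt_trans (ler_normD _ _)).
      rewrite (splitr (delta k)) -mulr2n; rewrite mulr2n.
      apply: ltrD; first by rewrite distrC.
      by rewrite distrC.
    by move=> h1 h2; have := lt_le_trans h1 h2; rewrite ltxx.
Qed.
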